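(* Let $\mu>0$ be an integer, $\beta\ge 2$ an integer base, and $f:\{0,1,\dots,\mu\}^\omega\to\mathbb{R}$ an aggregate function. If $f$ is $\omega$-regular under base $\beta$, then for every relation $R\in\{\le,<,\ge,>,=,\neq\}$ there is a B\''uchi automaton over $\{0,\dots,\mu\}\times\{0,\dots,\mu\}$ accepting exactly the pairs $(A,B)$ of sequences in $\{0,\dots,\mu\}^\omega$ (read synchronously) with $f(A)\,R\,f(B)$; i.e., the comparator of $f$ for every relation $R$ is $\omega$-regular.
   Context: Representation of reals: for an integer $\beta\ge 2$ let $\mathrm{Digit}(\beta)=\{0,\dots,\beta-1\}$. For $x\in\mathbb{R}$ there are unique words $\mathrm{Int}(x,\beta)=z_0z_1\cdots\in\mathrm{Digit}(\beta)^*0^\omega$ and $\mathrm{Frac}(x,\beta)=f_1f_2\cdots\notin \mathrm{Digit}(\beta)^*(\beta-1)^\omega$ with $|x|=\sum_{i\ge0}z_i\beta^i+\sum_{i\ge1}f_i\beta^{-i}$. The representation $\mathrm{rep}(x,\beta)$ is the $\omega$-word consisting of a sign symbol ($+$ if $x\ge0$, $-$ if $x<0$) followed by the interleaving of $\mathrm{Int}(x,\beta)$ and $\mathrm{Frac}(x,\beta)$; its alphabet is $\mathrm{AlphaRep}(\beta)=\{+,-\}\cup\mathrm{Digit}(\beta)$. A function $f:\Sigma^\omega\to\mathbb{R}$ ($\Sigma$ finite) is $\omega$-regular under base $\beta$ if there is a B\''uchi automaton over $\Sigma\times\mathrm{AlphaRep}(\beta)$ that, reading pairs of $\omega$-words synchronously,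 accepts $(A,\mathrm{rep}(x,\beta))$ iff $f(A)=x$, for all $A\in\Sigma^\omega$, $x\in\mathbb{R}$. A comparator automaton for $f$ and relation $R$ is an automaton over $\Sigma\times\Sigma$ accepting $(A,B)$ iff $f(A)\,R\,f(B)$; it is $\omega$-regular if it is a finite-state B\''uchi automaton. *)

(* Defs.v *)
From Stdlib Require Import Reals Lra Lia List.
Open Scope R_scope.

Definition FiniteType (Q : Type) : Prop := exists l : list Q, forall q : Q, In q l.

Definition oword (S : Type) := nat -> S.

Record Buchi (S : Type) := mkBuchi {
  bstate : Type;
  bstate_finite : FiniteType bstate;
  binit : bstate -> Prop;
  bdelta : bstate -> S -> bstate -> Prop;
  bacc : bstate -> Prop
}.
Arguments bstate {S}. Arguments binit {S}. Arguments bdelta {S}. Arguments bacc {S}.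

Definition accepts {Al : Type} (B : Buchi Al) (w : oword Al) : Prop :=
  exists r : nat -> bstate B,
    binit B (r 0%nat) /\
    (forall i, bdelta B (r i) (w i) (r (S i))) /\
    (forall n, exists m, (n <= m)%nat /\ bacc B (r m)).

Definition zipw {S T : Type} (a : oword S) (b : oword T) : oword (S * T) :=
  fun i => (a i, b i).

Definition Digit (beta : nat) := {d : nat | (d < beta)%nat}.
Definition dval {beta} (d : Digit beta) : nat := proj1_sig d.

Inductive AlphaRep (beta : nat) : Type :=
| APlus : AlphaRep beta
| AMinus : AlphaRep beta
| ADig : Digit beta -> AlphaRep beta.
Arguments APlus {beta}. Arguments AMinus {beta}. Arguments ADig {beta}.

(** [IsRep beta x w] : w = rep(x, beta).
    Int(x,beta) = z_0 z_1 ..., Frac(x,beta) = f_1 f_2 ... with [fr i = f_{i+1}];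
    rep = sign, z_0, f_1, z_1, f_2, ...  *)
Definition IsRep (beta : nat) (x : R) (w : oword (AlphaRep beta)) : Prop :=
  exists (z fr : nat -> Digit beta),
    ((0 <= x /\ w 0%nat = APlus) \/ (x < 0 /\ w 0%nat = AMinus)) /\
    (forall k, w (2 * k + 1)%nat = ADig (z k) /\ w (2 * k + 2)%nat = ADig (fr k)) /\
    (exists N, forall i, (N <= i)%nat -> dval (z i) = 0%nat) /\
    ~ (exists N, forall i, (N <= i)%nat -> dval (fr i) = (beta - 1)%nat) /\
    (exists a b : R,
        infinite_sum (fun i => INR (dval (z i)) * INR beta ^ i) a /\
        infinite_sum (fun i => INR (dval (fr i)) / INR beta ^ (S i)) b /\
        Rabs x = a + b).

Definition Sig (mu : nat) := {n : nat | (n <= mu)%nat}.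

Definition omega_regular_fun {Sg : Type} (beta : nat) (f : oword Sg -> R) : Prop :=
  exists B : Buchi (Sg * AlphaRep beta),
    forall (A : oword Sg) (x : R) (w : oword (AlphaRep beta)),
      IsRep beta x w -> (accepts B (zipw A w) <-> f A = x).

Inductive Rel := Rle' | Rlt' | Rge' | Rgt' | Req' | Rneq'.
Definition relR (r : Rel) (a b : R) : Prop :=
  match r with
  | Rle' => a <= b | Rlt' => a < b | Rge' => a >= b
  | Rgt' => a > b | Req' => a = b | Rneq' => a <> b
  end.

Definition omega_regular_comparator {Sg : Type} (f : oword Sg -> R) (r : Rel) : Prop :=
  exists B : Buchi (Sg * Sg),
    forall A C : oword Sg, accepts B (zipw A C) <-> relR r (f A) (f C).

(* Main.v *)
Require Import Defs.
From Stdlib Require Import Reals.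
From Stdlib Require Import Lra Lia List ClassicalEpsilon FunctionalExtensionality.
Open Scope R_scope.


Definition inf (p : nat -> Prop) := forall n, exists m, (n <= m)%nat /\ p m.
Definition isrun {St A : Type} (I : St -> Prop) (D : St -> A -> St -> Prop)
  (w : oword A) (r : nat -> St) := I (r 0%nat) /\ forall i, D (r i) (w i) (r (S i)).

Definition decP (P : Prop) : bool := if excluded_middle_informative P then true else false.
Lemma decP_true (P : Prop) : decP P = true <-> P.
Proof. unfold decP; destruct (excluded_middle_informative P); split; auto; discriminate. Qed.
Lemma decP_false (P : Prop) : decP P = false <-> ~ P.
Proof. unfold decP; destruct (excluded_middle_informative P); split; intuition; discriminate. Qed.

Definition stepb {St : Type} (P Q : St -> Prop) (s : St) (b : bool) : bool :=
  if b then negb (decP (Q s)) else decP (P s).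
Definition I2 {St} (I : St -> Prop) (x : St * bool) := I (fst x) /\ snd x = false.
Definition D2 {St A} (D : St -> A -> St -> Prop) (P Q : St -> Prop)
  (x : St * bool) (a : A) (y : St * bool) :=
  D (fst x) a (fst y) /\ snd y = stepb P Q (fst x) (snd x).
Definition Acc2 {St} (Q : St -> Prop) (x : St * bool) := snd x = true /\ Q (fst x).

Lemma FT_prod (X Y : Type) : FiniteType X -> FiniteType Y -> FiniteType (X * Y).
Proof.
  intros [lx Hx] [ly Hy]. exists (list_prod lx ly). intros [x y].
  apply in_prod; auto.
Qed.

Lemma FT_bool : FiniteType bool.
Proof. exists (true :: false :: nil). intros []; simpl; auto. Qed.

Lemma FT_surj (X Y : Type) (f : X -> Y) : FiniteType X -> (forall y, exists x, f x = y) -> FiniteType Y.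
Proof.
  intros [l Hl] Hs. exists (map f l). intros y. destruct (Hs y) as [x <-]. apply in_map; auto.
Qed.

Lemma inter2_fwd {St A} (I : St -> Prop) D P Q (w : oword A) (r : nat -> St * bool) :
  isrun (I2 I) (D2 D P Q) w r -> inf (fun i => Acc2 Q (r i)) ->
  isrun I D w (fun i => fst (r i)) /\ inf (fun i => P (fst (r i))) /\ inf (fun i => Q (fst (r i))).
Proof.
  intros [HI HD] Hacc. split; [split; [apply HI| intros i; apply HD]|].
  split.
  - intros n. destruct (Hacc n) as [m [Hm [Hb HQ]]].
    (* after m, b becomes false; later some m' > m with b true *)
    assert (Hm1 : snd (r (S m)) = false).
    { destruct (HD m) as [_ E]. rewrite E, Hb. unfold stepb.
      destruct (decP (Q (fst (r m)))) eqn:E2; auto. apply decP_false in E2. contradiction. }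
    destruct (Hacc (S m)) as [m' [Hm' [Hb' _]]].
    assert (forall k, snd (r (S m)) = false -> snd (r (S m + k)%nat) = true ->
              exists j, (S m <= j)%nat /\ P (fst (r j))) as G.
    { induction k as [|k IH]; intros H0 H1.
      - rewrite Nat.add_0_r in H1. congruence.
      - destruct (snd (r (S m + k)%nat)) eqn:E.
        + apply IH; auto.
        + exists (S m + k)%nat. split; [lia|].
          destruct (HD (S m + k)%nat) as [_ E3].
          replace (S (S m + k)) with (S m + S k)%nat in E3 by lia.
          rewrite H1, E in E3. change (true = decP (P (fst (r (S m + k)%nat)))) in E3. symmetry in E3. apply (proj1 (decP_true _)) in E3; auto. }
    assert (Hx : snd (r (S m + (m' - S m))%nat) = true).
    { replace (S m + (m' - S m))%nat with m' by lia. auto. }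
    destruct (G (m' - S m)%nat Hm1 Hx) as [j [Hj HP]].
    exists j; split; auto; lia.
  - intros n. destruct (Hacc n) as [m [Hm [Hb HQ]]]. exists m; auto.
Qed.

Fixpoint bseq {St} (P Q : St -> Prop) (r : nat -> St) (i : nat) : bool :=
  match i with 0 => false | S i => stepb P Q (r i) (bseq P Q r i) end.

Lemma inter2_bwd {St A} (I : St -> Prop) D P Q (w : oword A) (r : nat -> St) :
  isrun I D w r -> inf (fun i => P (r i)) -> inf (fun i => Q (r i)) ->
  exists r' : nat -> St * bool, isrun (I2 I) (D2 D P Q) w r' /\ (forall i, fst (r' i) = r i) /\
    inf (fun i => Acc2 Q (r' i)).
Proof.
  intros [HI HD] HP HQ.
  exists (fun i => (r i, bseq P Q r i)). split; [split|split].
  - split; simpl; auto.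
  - intros i. split; simpl; auto.
  - intros; reflexivity.
  - intros n. unfold Acc2; simpl.
    assert (G1 : forall k j, bseq P Q r j = false -> P (r (j + k)%nat) ->
       exists m, (j <= m)%nat /\ bseq P Q r m = true).
    { induction k as [|k IH]; intros j H0 H1.
      - exists (S j). split; [lia|]. simpl. rewrite H0. simpl. rewrite Nat.add_0_r in H1.
        apply (proj2 (decP_true _)); auto.
      - destruct (bseq P Q r (S j)) eqn:E.
        + exists (S j); split; auto; lia.
        + destruct (IH (S j) E) as [m [Hm Hm']]. replace (S j + k)%nat with (j + S k)%nat by lia; auto.
          exists m; split; auto; lia. }
    assert (G2 : forall k j, bseq P Q r j = true -> Q (r (j + k)%nat) ->
       exists m, (j <= m)%nat /\ bseq P Q r m = true /\ Q (r m)).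
    { induction k as [|k IH]; intros j H0 H1.
      - exists j. rewrite Nat.add_0_r in H1. split; auto.
      - destruct (decP (Q (r j))) eqn:EQ.
        + exists j. split; auto. split; auto. apply (proj1 (decP_true _)); auto.
        + assert (E : bseq P Q r (S j) = true).
          { change (stepb P Q (r j) (bseq P Q r j) = true). rewrite H0. unfold stepb. rewrite EQ. reflexivity. }
          destruct (IH (S j) E) as [m [Hm Hm']]. replace (S j + k)%nat with (j + S k)%nat by lia; auto.
          exists m; split; auto; lia. }
    assert (Hb : exists m, (n <= m)%nat /\ bseq P Q r m = true).
    { destruct (bseq P Q r n) eqn:E. exists n; split; auto.
      destruct (HP n) as [k [Hk HPk]]. apply (G1 (k - n)%nat n E).
      replace (n + (k - n))%nat with k by lia; auto. }
    destruct Hb as [m [Hm Hbm]]. destruct (HQ m) as [k [Hk HQk]].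
    destruct (G2 (k - m)%nat m Hbm) as [j [Hj [Hj1 Hj2]]].
    replace (m + (k - m))%nat with k by lia; auto.
    exists j; split; auto; lia.
Qed.


Fixpoint Isum (z : nat -> nat) (b n : nat) : nat :=
  match n with 0 => 0 | S n => Isum z b n + z n * b ^ n end%nat.
Fixpoint Pn (d : nat -> nat) (b n : nat) : nat :=
  match n with 0 => 0 | S n => b * Pn d b n + d n end%nat.

Lemma Isum_lt z b n : (forall i, z i < b)%nat -> (Isum z b n < b ^ n)%nat.
Proof.
  intros H. induction n; simpl. lia.
  specialize (H n). assert (z n * b ^ n <= (b - 1) * b ^ n)%nat by (apply Nat.mul_le_mono_r; lia).
  destruct b. lia. replace (S b - 1)%nat with b in H0 by lia. nia.
Qed.

Lemma Pn_lt d b n : (forall i, d i < b)%nat -> (Pn d b n < b ^ n)%nat.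
Proof.
  intros H. induction n; simpl. lia. specialize (H n). nia.
Qed.

Definition cmpsel (c1 c2 : comparison) : comparison := match c1 with Eq => c2 | c => c end.

Lemma Isum_cmp z z' b n : (forall i, z i < b)%nat -> (forall i, z' i < b)%nat ->
  Nat.compare (Isum z b (S n)) (Isum z' b (S n)) =
  cmpsel (Nat.compare (z n) (z' n)) (Nat.compare (Isum z b n) (Isum z' b n)).
Proof.
  intros H H'. pose proof (Isum_lt z b n H). pose proof (Isum_lt z' b n H'). simpl.
  unfold cmpsel. destruct (Nat.compare_spec (z n) (z' n)) as [E|E|E].
  - rewrite E. destruct (Nat.compare_spec (Isum z b n) (Isum z' b n)) as [E2|E2|E2];
    [apply Nat.compare_eq_iff | apply Nat.compare_lt_iff | apply Nat.compare_gt_iff]; lia.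
  - apply Nat.compare_lt_iff. assert (z n + 1 <= z' n)%nat by lia. nia.
  - apply Nat.compare_gt_iff. assert (z' n + 1 <= z n)%nat by lia. nia.
Qed.

Lemma Pn_cmp d e b n : (forall i, d i < b)%nat -> (forall i, e i < b)%nat ->
  Nat.compare (Pn d b (S n)) (Pn e b (S n)) =
  cmpsel (Nat.compare (Pn d b n) (Pn e b n)) (Nat.compare (d n) (e n)).
Proof.
  intros H H'. pose proof (H n). pose proof (H' n). simpl.
  unfold cmpsel. destruct (Nat.compare_spec (Pn d b n) (Pn e b n)) as [E|E|E].
  - rewrite E. destruct (Nat.compare_spec (d n) (e n)) as [E2|E2|E2];
    [apply Nat.compare_eq_iff | apply Nat.compare_lt_iff | apply Nat.compare_gt_iff]; lia.
  - apply Nat.compare_lt_iff. assert (Pn d b n + 1 <= Pn e b n)%nat by lia. nia.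
  - apply Nat.compare_gt_iff. assert (Pn e b n + 1 <= Pn d b n)%nat by lia. nia.
Qed.

Lemma Pn_up d b n k : (forall i, d i < b)%nat -> (Pn d b (n + k) + 1 <= b ^ k * (Pn d b n + 1))%nat.
Proof.
  intros H. induction k. simpl. rewrite Nat.add_0_r. lia.
  replace (n + S k)%nat with (S (n + k)) by lia. simpl. specialize (H (n + k)%nat). nia.
Qed.

Lemma Pn_up_strict d b n k : (forall i, d i < b)%nat -> (d (n + k) < b - 1)%nat ->
  (Pn d b (S (n + k)) + 1 < b ^ (S k) * (Pn d b n + 1))%nat.
Proof.
  intros H Hk. pose proof (Pn_up d b n k H). simpl. nia.
Qed.

Lemma sum_mono (s : nat -> R) n m : (forall i, 0 <= s i) -> (n <= m)%nat -> sum_f_R0 s n <= sum_f_R0 s m.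
Proof.
  intros H Hnm. induction Hnm. lra. simpl. specialize (H (S m)). lra.
Qed.

Lemma sum_le_lim (s : nat -> R) l n : (forall i, 0 <= s i) -> infinite_sum s l -> sum_f_R0 s n <= l.
Proof.
  intros H Hl. destruct (Rle_or_lt (sum_f_R0 s n) l) as [|Hc]; auto. exfalso.
  destruct (Hl (sum_f_R0 s n - l)) as [N HN]. lra.
  specialize (HN (max N n) (Nat.le_max_l _ _)). pose proof (sum_mono s n (max N n) H (Nat.le_max_r _ _)).
  unfold R_dist in HN. apply Rabs_def2 in HN. lra.
Qed.

Lemma lim_le (s : nat -> R) l c n : infinite_sum s l -> (forall m, (n <= m)%nat -> sum_f_R0 s m <= c) -> l <= c.
Proof.
  intros Hl H. destruct (Rle_or_lt l c) as [|Hc]; auto. exfalso.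
  destruct (Hl (l - c)) as [N HN]. lra.
  specialize (HN (max N n) (Nat.le_max_l _ _)). specialize (H (max N n) (Nat.le_max_r _ _)).
  unfold R_dist in HN. apply Rabs_def2 in HN. lra.
Qed.

Lemma INR_pow_pos b n : (1 <= b)%nat -> 0 < INR (b ^ n).
Proof. intros H. apply lt_0_INR. apply Nat.neq_0_lt_0. apply Nat.pow_nonzero. lia. Qed.

Lemma div_lt_nat X Y p q : (0 < p)%nat -> (0 < q)%nat -> (X * q < Y * p)%nat ->
  INR X / INR p < INR Y / INR q.
Proof.
  intros Hp Hq H. apply lt_INR in H. rewrite !mult_INR in H.
  apply lt_0_INR in Hp. apply lt_0_INR in Hq.
  apply (Rmult_lt_reg_r (INR p * INR q)). nra.
  replace (INR X / INR p * (INR p * INR q)) with (INR X * INR q) by (field; lra).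
  replace (INR Y / INR q * (INR p * INR q)) with (INR Y * INR p) by (field; lra). lra.
Qed.

Lemma div_le_nat X Y p q : (0 < p)%nat -> (0 < q)%nat -> (X * q <= Y * p)%nat ->
  INR X / INR p <= INR Y / INR q.
Proof.
  intros Hp Hq H. apply le_INR in H. rewrite !mult_INR in H.
  apply lt_0_INR in Hp. apply lt_0_INR in Hq.
  apply (Rmult_le_reg_r (INR p * INR q)). nra.
  replace (INR X / INR p * (INR p * INR q)) with (INR X * INR q) by (field; lra).
  replace (INR Y / INR q * (INR p * INR q)) with (INR Y * INR p) by (field; lra). lra.
Qed.

Definition fterm (d : nat -> nat) (b : nat) (i : nat) : R := INR (d i) / INR b ^ (S i).

Lemma fsum_eq d b n : (1 <= b)%nat -> sum_f_R0 (fterm d b) n = INR (Pn d b (S n)) / INR (b ^ S n).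
Proof.
  intros Hb. assert (0 < INR b) by (apply lt_0_INR; lia).
  induction n.
  - unfold fterm. simpl. rewrite Nat.mul_0_r. simpl. rewrite Rmult_1_r, Nat.mul_1_r. reflexivity.
  - simpl sum_f_R0. rewrite IHn. unfold fterm.
    change (Pn d b (S (S n))) with (b * Pn d b (S n) + d (S n))%nat.
    rewrite plus_INR, mult_INR, !pow_INR.
    assert (0 < INR b ^ S n) by (apply pow_lt; auto).
    replace (INR b ^ S (S n)) with (INR b * INR b ^ S n) by reflexivity.
    field. lra.
Qed.

Lemma fterm_nonneg d b i : 0 <= fterm d b i.
Proof.
  unfold fterm. destruct (Nat.eq_dec b 0). subst. simpl. rewrite Rmult_0_l.
  unfold Rdiv. rewrite Rinv_0, Rmult_0_r. lra.
  apply Rmult_le_pos. apply pos_INR. left. apply Rinv_0_lt_compat. apply pow_lt. apply lt_0_INR; lia.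
Qed.

Lemma frac_lower d b l n : (1 <= b)%nat -> infinite_sum (fterm d b) l ->
  INR (Pn d b n) / INR (b ^ n) <= l.
Proof.
  intros Hb Hl. destruct n.
  - simpl. unfold Rdiv. rewrite Rmult_0_l. eapply Rle_trans. 2: apply (sum_le_lim _ _ 0%nat (fterm_nonneg d b) Hl).
    simpl. apply fterm_nonneg.
  - rewrite <- fsum_eq; auto. apply sum_le_lim; auto. apply fterm_nonneg.
Qed.

Lemma frac_upper d b l n : (1 <= b)%nat -> (forall i, d i < b)%nat -> infinite_sum (fterm d b) l ->
  l <= INR (Pn d b n + 1) / INR (b ^ n).
Proof.
  intros Hb Hd Hl. apply (lim_le _ _ _ n Hl). intros m Hm. rewrite fsum_eq; auto.
  apply div_le_nat; try (apply Nat.neq_0_lt_0; apply Nat.pow_nonzero; lia).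
  pose proof (Pn_up d b n (S m - n) Hd). replace (n + (S m - n))%nat with (S m) in H by lia.
  replace (b ^ S m)%nat with (b ^ (S m - n) * b ^ n)%nat.
  2:{ rewrite <- Nat.pow_add_r. f_equal. lia. }
  set (X := Pn d b (S m)) in *. set (Y := Pn d b n) in *. set (u := (b ^ (S m - n))%nat) in *.
  set (v := (b ^ n)%nat) in *.
  apply Nat.le_trans with ((X + 1) * v)%nat. nia.
  replace ((Y + 1) * (u * v))%nat with ((u * (Y + 1)) * v)%nat by ring.
  apply Nat.mul_le_mono_r. exact H.
Qed.

Lemma frac_upper_strict d b l n : (1 <= b)%nat -> (forall i, d i < b)%nat -> infinite_sum (fterm d b) l ->
  ~ (exists N, forall i, (N <= i)%nat -> d i = (b - 1)%nat) ->
  l < INR (Pn d b n + 1) / INR (b ^ n).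
Proof.
  intros Hb Hd Hl HN.
  assert (exists k, (n <= k)%nat /\ d k <> (b - 1)%nat) as [k [Hk Hdk]].
  { apply NNPP. intros C. apply HN. exists n. intros i Hi.
    apply NNPP. intros C2. apply C. exists i; auto. }
  eapply Rle_lt_trans. apply (frac_upper d b l (S k) Hb Hd Hl).
  apply div_lt_nat; try (apply Nat.neq_0_lt_0; apply Nat.pow_nonzero; lia).
  pose proof (Pn_up_strict d b n (k - n) Hd) as H. replace (n + (k - n))%nat with k in H by lia.
  specialize (H ltac:(specialize (Hd k); lia)).
  replace (b ^ S k)%nat with (b ^ S (k - n) * b ^ n)%nat.
  2:{ rewrite <- Nat.pow_add_r. f_equal. lia. }
  set (X := Pn d b (S k)) in *. set (Y := Pn d b n) in *. set (u := (b ^ S (k - n))%nat) in *.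
  set (v := (b ^ n)%nat) in *.
  assert (0 < v)%nat by (apply Nat.neq_0_lt_0; apply Nat.pow_nonzero; lia).
  apply Nat.le_lt_trans with ((X + 1) * v)%nat. nia.
  replace ((Y + 1) * (u * v))%nat with ((u * (Y + 1)) * v)%nat by ring.
  apply Nat.mul_lt_mono_pos_r; auto.
Qed.


Lemma isum_sum z b n : sum_f_R0 (fun i => INR (z i) * INR b ^ i) n = INR (Isum z b (S n)).
Proof.
  induction n. simpl sum_f_R0. change (Isum z b 1) with (0 + z 0%nat * 1)%nat. rewrite plus_INR, mult_INR. simpl. ring.
  simpl sum_f_R0. rewrite IHn. change (Isum z b (S (S n))) with (Isum z b (S n) + z (S n) * b ^ (S n))%nat. rewrite plus_INR, mult_INR, pow_INR. simpl. ring.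
Qed.

Lemma Isum_stable z b N k : (forall i, (N <= i)%nat -> z i = 0%nat) -> Isum z b (N + k) = Isum z b N.
Proof.
  intros H. induction k. rewrite Nat.add_0_r; auto.
  replace (N + S k)%nat with (S (N + k)) by lia. simpl. rewrite IHk, H by lia. lia.
Qed.

Lemma int_sum z b N : (forall i, (N <= i)%nat -> z i = 0%nat) ->
  infinite_sum (fun i => INR (z i) * INR b ^ i) (INR (Isum z b N)).
Proof.
  intros H eps He. exists N. intros n Hn. rewrite isum_sum.
  replace (S n) with (N + (S n - N))%nat by lia. rewrite Isum_stable; auto.
  unfold R_dist. rewrite Rminus_diag, Rabs_R0. auto.
Qed.

Lemma frac_exists d b : (1 <= b)%nat -> (forall i, d i < b)%nat -> exists l, infinite_sum (fterm d b) l.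
Proof.
  intros Hb Hd. assert (Hg : Un_growing (sum_f_R0 (fterm d b))).
  { intros n. simpl. pose proof (fterm_nonneg d b (S n)). lra. }
  assert (Hbd : bound (EUn (sum_f_R0 (fterm d b)))).
  { exists 1. intros x [n ->]. rewrite fsum_eq; auto.
    apply Rle_trans with (INR (Pn d b 0 + 1) / INR (b ^ 0)).
    apply div_le_nat; try (apply Nat.neq_0_lt_0; apply Nat.pow_nonzero; lia).
    pose proof (Pn_up d b 0 (S n) Hd). simpl in *. lia.
    simpl. lra. }
  destruct (growing_cv _ Hg Hbd) as [l Hl]. exists l. exact Hl.
Qed.

Lemma floor_ex (u : R) : 0 <= u -> exists n : nat, INR n <= u < INR n + 1.
Proof.
  intros Hu. destruct (base_Int_part u) as [H1 H2].
  assert (0 <= Int_part u)%Z.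
  { apply le_IZR. unfold Int_part in *. rewrite minus_IZR in *. destruct (archimed u). simpl in *.
    assert (IZR (up u) > 0) by lra.
    assert (0 < up u)%Z by (apply lt_IZR; lra). assert (1 <= up u)%Z by lia. apply IZR_le in H5. simpl in H5. lra. }
  exists (Z.to_nat (Int_part u)). rewrite INR_IZR_INZ, Znat.Z2Nat.id by auto. lra.
Qed.

Definition floorn (u : R) : nat :=
  match excluded_middle_informative (0 <= u) with
  | left H => proj1_sig (constructive_indefinite_description _ (floor_ex u H))
  | right _ => 0%nat end.

Lemma floorn_spec u : 0 <= u -> INR (floorn u) <= u < INR (floorn u) + 1.
Proof.
  intros H. unfold floorn. destruct (excluded_middle_informative (0 <= u)); [|contradiction].
  destruct (constructive_indefinite_description _ _) as [n Hn]. simpl. auto.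
Qed.

Lemma floorn_unique u n : INR n <= u < INR n + 1 -> floorn u = n.
Proof.
  intros [H1 H2]. assert (0 <= u) by (pose proof (pos_INR n); lra).
  destruct (floorn_spec u H).
  destruct (Nat.lt_trichotomy (floorn u) n) as [C|[C|C]]; auto; exfalso.
  - assert (HH : INR (S (floorn u)) <= INR n) by (apply le_INR; lia). rewrite S_INR in HH. lra.
  - assert (HH : INR (S n) <= INR (floorn u)) by (apply le_INR; lia). rewrite S_INR in HH. lra.
Qed.

Lemma pow_big b : (2 <= b)%nat -> forall eps, 0 < eps -> exists n, forall m, (n <= m)%nat -> / INR (b ^ m) < eps.
Proof.
  intros Hb eps He. destruct (archimed (/ eps)) as [H1 _].
  assert (0 < / eps) by (apply Rinv_0_lt_compat; auto).
  assert (0 <= IZR (up (/ eps))) by lra.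
  exists (Z.to_nat (up (/ eps))). intros m Hm.
  assert (Hm2 : (m < b ^ m)%nat) by (apply Nat.pow_gt_lin_r; lia).
  assert (INR (Z.to_nat (up (/ eps))) = IZR (up (/eps))).
  { rewrite INR_IZR_INZ, Znat.Z2Nat.id; auto. apply le_IZR; auto. }
  apply le_INR in Hm. apply lt_INR in Hm2.
  assert (/ eps < INR (b ^ m)) by lra.
  assert (0 < INR (b^m)) by lra.
  apply (Rmult_lt_reg_r (INR (b ^ m))); auto. rewrite Rinv_l by lra.
  apply (Rmult_lt_reg_l (/ eps)); auto. rewrite Rmult_1_r, <- Rmult_assoc, Rinv_l by lra. lra.
Qed.


Lemma Isum_mod N b n : (b <> 0)%nat -> Isum (fun i => (N / b ^ i) mod b)%nat b n = (N mod b ^ n)%nat.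
Proof.
  intros Hb. induction n.
  - cbn [Isum]. change (b ^ 0)%nat with 1%nat. rewrite Nat.mod_1_r. reflexivity.
  - simpl Isum. rewrite IHn. replace (b ^ S n)%nat with (b ^ n * b)%nat by (simpl; ring).
    rewrite Nat.Div0.mod_mul_r. ring.
Qed.

Definition mkword (b : nat) (sg : AlphaRep b) (z fr : nat -> Digit b) : oword (AlphaRep b) :=
  fun i => match i with 0%nat => sg | S j => if Nat.even j then ADig (z (Nat.div2 j)) else ADig (fr (Nat.div2 j)) end.

Lemma mkword_z b sg z fr k : mkword b sg z fr (2 * k + 1)%nat = ADig (z k).
Proof. unfold mkword. rewrite Nat.add_1_r, Nat.even_even, Nat.div2_double. reflexivity. Qed.
Lemma mkword_f b sg z fr k : mkword b sg z fr (2 * k + 2)%nat = ADig (fr k).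
Proof.
  unfold mkword. replace (2 * k + 2)%nat with (S (2 * k + 1)) by lia.
  rewrite Nat.even_odd, Nat.div2_odd'. reflexivity.
Qed.

Lemma rep_exists b x : (2 <= b)%nat -> exists w, IsRep b x w.
Proof.
  intros Hb. set (t := Rabs x). assert (Ht : 0 <= t) by apply Rabs_pos.
  set (N := floorn t). destruct (floorn_spec t Ht) as [HN1 HN2]. fold N in HN1, HN2.
  set (s := t - INR N). assert (Hs : 0 <= s < 1) by (unfold s; lra).
  assert (Hbp : forall n, 0 < INR (b ^ n)) by (intros; apply INR_pow_pos; lia).
  set (Q := fun n => floorn (s * INR (b ^ n))).
  assert (HQ : forall n, INR (Q n) <= s * INR (b ^ n) < INR (Q n) + 1).
  { intros n. apply floorn_spec. specialize (Hbp n). nra. }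
  assert (HQs : forall n, (b * Q n <= Q (S n) < b * Q n + b)%nat).
  { intros n. destruct (HQ n) as [A1 A2]. destruct (HQ (S n)) as [B1 B2].
    assert (E : INR (b ^ S n) = INR b * INR (b ^ n)) by (rewrite <- mult_INR; reflexivity).
    assert (0 < INR b) by (apply lt_0_INR; lia).
    split.
    - assert (INR (b * Q n) < INR (Q (S n) + 1)).
      { rewrite mult_INR, plus_INR. simpl. rewrite E in B2. nra. }
      apply INR_lt in H0. lia.
    - assert (INR (Q (S n)) < INR (b * Q n + b)).
      { rewrite plus_INR, mult_INR. rewrite E in B1. nra. }
      apply INR_lt in H0. lia. }
  assert (HQ0 : Q 0%nat = 0%nat).
  { unfold Q. apply floorn_unique. simpl. lra. }
  set (f := fun n => (Q (S n) - b * Q n)%nat).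
  assert (Hf : forall n, (f n < b)%nat) by (intros n; unfold f; specialize (HQs n); lia).
  assert (HPn : forall n, Pn f b n = Q n).
  { induction n. simpl; auto. simpl. rewrite IHn. unfold f. specialize (HQs n). lia. }
  set (z := fun i => ((N / b ^ i) mod b)%nat).
  assert (Hz : forall i, (z i < b)%nat) by (intros; apply Nat.mod_upper_bound; lia).
  set (zD := fun i => exist (fun d => (d < b)%nat) (z i) (Hz i) : Digit b).
  set (fD := fun i => exist (fun d => (d < b)%nat) (f i) (Hf i) : Digit b).
  set (sg := if Rle_dec 0 x then @APlus b else @AMinus b).
  exists (mkword b sg zD fD). exists zD, fD.
  split; [|split; [|split; [|split]]].
  - unfold sg. destruct (Rle_dec 0 x); [left|right]; split; auto; lra.
  - intros k. rewrite mkword_z, mkword_f. auto.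
  - exists N. intros i Hi. simpl. unfold z.
    rewrite Nat.div_small. apply Nat.Div0.mod_0_l.
    apply Nat.le_lt_trans with i; auto. apply Nat.pow_gt_lin_r; lia.
  - intros [M HM]. simpl in HM. fold f in HM.
    assert (Hk : forall k, (Q (M + k) + 1 = b ^ k * (Q M + 1))%nat).
    { induction k. simpl. rewrite Nat.add_0_r. lia.
      replace (M + S k)%nat with (S (M + k)) by lia.
      specialize (HM (M + k)%nat ltac:(lia)). unfold f in HM. specialize (HQs (M + k)%nat).
      simpl. rewrite <- Nat.mul_assoc, <- IHk. lia. }
    destruct (HQ M) as [_ H2].
    set (del := (INR (Q M) + 1) / INR (b ^ M) - s).
    assert (Hdel : 0 < del).
    { unfold del. specialize (Hbp M). apply Rlt_Rminus. apply (Rmult_lt_reg_r (INR (b ^ M))); auto.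
      unfold Rdiv. rewrite Rmult_assoc, Rinv_l by lra. lra. }
    destruct (pow_big b Hb del Hdel) as [K HK].
    specialize (HK (M + K)%nat ltac:(lia)).
    destruct (HQ (M + K)%nat) as [H3 _].
    specialize (Hk K).
    assert (E : INR (Q (M + K)%nat) = INR (b ^ K) * (INR (Q M) + 1) - 1).
    { apply (f_equal INR) in Hk. rewrite plus_INR, mult_INR, plus_INR in Hk. simpl in Hk. lra. }
    assert (E2 : INR (b ^ (M + K)) = INR (b ^ M) * INR (b ^ K)) by (rewrite Nat.pow_add_r, mult_INR; auto).
    rewrite E, E2 in H3. rewrite E2 in HK.
    pose proof (Hbp M). pose proof (Hbp K).
    assert (HP : 0 < INR (b ^ M) * INR (b ^ K)) by (apply Rmult_lt_0_compat; auto).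
    assert (H5 : / (INR (b ^ M) * INR (b ^ K)) * (INR (b ^ M) * INR (b ^ K)) < del * (INR (b ^ M) * INR (b ^ K)))
      by (apply Rmult_lt_compat_r; auto).
    rewrite Rinv_l in H5 by lra.
    assert (E3 : del * (INR (b ^ M) * INR (b ^ K)) = (INR (Q M) + 1) * INR (b ^ K) - s * (INR (b ^ M) * INR (b ^ K)))
      by (unfold del; field; lra).
    rewrite E3 in H5. lra.
  - assert (Hz0 : forall i, (N <= i)%nat -> z i = 0%nat).
    { intros i Hi. unfold z. rewrite Nat.div_small. apply Nat.Div0.mod_0_l.
      apply Nat.le_lt_trans with i; auto. apply Nat.pow_gt_lin_r; lia. }
    exists (INR (Isum z b N)), s. split; [|split].
    + exact (int_sum z b N Hz0).
    + change (infinite_sum (fterm f b) s). intros eps He.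
      destruct (pow_big b Hb eps He) as [K HK]. exists K. intros n Hn.
      rewrite fsum_eq by lia. rewrite HPn. specialize (HK (S n) ltac:(lia)).
      destruct (HQ (S n)) as [A1 A2]. specialize (Hbp (S n)).
      unfold R_dist. rewrite Rabs_left1.
      * apply (Rmult_lt_reg_r (INR (b ^ S n))); auto.
        assert (E4 : - (INR (Q (S n)) / INR (b ^ S n) - s) * INR (b ^ S n) = s * INR (b ^ S n) - INR (Q (S n)))
          by (field; lra).
        rewrite E4. assert (1 < eps * INR (b ^ S n)).
        { assert (H5 : / INR (b ^ S n) * INR (b ^ S n) < eps * INR (b ^ S n)) by (apply Rmult_lt_compat_r; auto).
          rewrite Rinv_l in H5 by lra. auto. }
        lra.
      * apply (Rmult_le_reg_r (INR (b ^ S n))); auto. rewrite Rmult_0_l.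
        assert (E4 : (INR (Q (S n)) / INR (b ^ S n) - s) * INR (b ^ S n) = INR (Q (S n)) - s * INR (b ^ S n))
          by (field; lra).
        rewrite E4. lra.
    + unfold z. rewrite Isum_mod by lia. rewrite Nat.mod_small. unfold s, t. lra.
      apply Nat.pow_gt_lin_r; lia.
Qed.


Definition rcmp (x y : R) : comparison :=
  match total_order_T x y with inleft (left _) => Lt | inleft (right _) => Eq | inright _ => Gt end.

Lemma rcmp_Lt x y : x < y -> rcmp x y = Lt.
Proof. intros H. unfold rcmp. destruct (total_order_T x y) as [[|]|]; auto; lra. Qed.
Lemma rcmp_Gt x y : y < x -> rcmp x y = Gt.
Proof. intros H. unfold rcmp. destruct (total_order_T x y) as [[|]|]; auto; lra. Qed.
Lemma rcmp_Eq x y : x = y -> rcmp x y = Eq.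
Proof. intros H. unfold rcmp. destruct (total_order_T x y) as [[|]|]; auto; lra. Qed.
Lemma rcmp_spec x y : (rcmp x y = Lt /\ x < y) \/ (rcmp x y = Eq /\ x = y) \/ (rcmp x y = Gt /\ y < x).
Proof. unfold rcmp. destruct (total_order_T x y) as [[|]|]; auto. Qed.

Definition isminus {b} (a : AlphaRep b) : bool := match a with AMinus => true | _ => false end.
Definition dig {b} (a : AlphaRep b) : nat := match a with ADig d => dval d | _ => 0%nat end.
Definition zz {b} (u : oword (AlphaRep b)) (k : nat) : nat := dig (u (2 * k + 1)%nat).
Definition ff {b} (u : oword (AlphaRep b)) (k : nat) : nat := dig (u (2 * k + 2)%nat).

Lemma dig_lt {b} (a : AlphaRep b) : (1 <= b)%nat -> (dig a < b)%nat.
Proof. intros H. destruct a; simpl; try lia. destruct d; simpl; auto. Qed.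

Lemma rep_info b x u : (2 <= b)%nat -> IsRep b x u ->
  ((isminus (u 0%nat) = false /\ 0 <= x) \/ (isminus (u 0%nat) = true /\ x < 0)) /\
  (forall k, exists d, u (2 * k + 1)%nat = ADig d) /\ (forall k, exists d, u (2 * k + 2)%nat = ADig d) /\
  exists N bb, (forall i, (N <= i)%nat -> zz u i = 0%nat) /\ infinite_sum (fterm (ff u) b) bb /\
     ~ (exists M, forall i, (M <= i)%nat -> ff u i = (b - 1)%nat) /\
     Rabs x = INR (Isum (zz u) b N) + bb.
Proof.
  intros Hb [z [fr [Hs [Hw [[N HN] [Hnf [a [bb [Ha [Hbb Habs]]]]]]]]]].
  assert (Ez : forall k, zz u k = dval (z k)) by (intros k; unfold zz; rewrite (proj1 (Hw k)); reflexivity).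
  assert (Ef : forall k, ff u k = dval (fr k)) by (intros k; unfold ff; rewrite (proj2 (Hw k)); reflexivity).
  split; [|split; [|split]].
  - destruct Hs as [[H1 H2]|[H1 H2]]; [left|right]; rewrite H2; auto.
  - intros k. exists (z k). apply Hw.
  - intros k. exists (fr k). apply Hw.
  - exists N, bb. split; [|split; [|split]].
    + intros i Hi. rewrite Ez. auto.
    + replace (fterm (ff u) b) with (fun i => INR (dval (fr i)) / INR b ^ S i); auto.
      apply functional_extensionality. intros i. unfold fterm. rewrite Ef. auto.
    + intros [M HM]. apply Hnf. exists M. intros i Hi. rewrite <- Ef. auto.
    + rewrite Habs. f_equal. apply (uniqueness_sum (fun i => INR (dval (z i)) * INR b ^ i)); auto.
      replace (fun i => INR (dval (z i)) * INR b ^ i) with (fun i => INR (zz u i) * INR b ^ i).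
      apply int_sum. intros i Hi. rewrite Ez; auto.
      apply functional_extensionality. intros i. rewrite Ez. auto.
Qed.

Lemma abs_bounds b x u : (2 <= b)%nat -> IsRep b x u ->
  exists N, forall k, (N <= k)%nat ->
    INR (Isum (zz u) b k) + INR (Pn (ff u) b k) / INR (b ^ k) <= Rabs x /\
    Rabs x < INR (Isum (zz u) b k) + INR (Pn (ff u) b k + 1) / INR (b ^ k) /\
    Rabs x < INR (Isum (zz u) b k) + 1 /\ INR (Isum (zz u) b k) <= Rabs x.
Proof.
  intros Hb H. destruct (rep_info b x u Hb H) as [_ [_ [_ [N [bb [HN [Hbb [Hnf Habs]]]]]]]].
  exists N. intros k Hk.
  assert (Hd : forall i, (ff u i < b)%nat) by (intros; apply dig_lt; lia).
  assert (E : Isum (zz u) b k = Isum (zz u) b N).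
  { replace k with (N + (k - N))%nat by lia. apply Isum_stable; auto. }
  rewrite E, Habs.
  pose proof (frac_lower (ff u) b bb k ltac:(lia) Hbb).
  pose proof (frac_upper_strict (ff u) b bb k ltac:(lia) Hd Hbb Hnf).
  pose proof (frac_lower (ff u) b bb 0 ltac:(lia) Hbb).
  pose proof (frac_upper_strict (ff u) b bb 0 ltac:(lia) Hd Hbb Hnf).
  replace (INR (Pn (ff u) b 0) / INR (b ^ 0)) with 0 in H2 by (simpl; field).
  replace (INR (Pn (ff u) b 0 + 1) / INR (b ^ 0)) with 1 in H3 by (simpl; field).
  lra.
Qed.

Lemma abs_cmp_lt b x y (u v : oword (AlphaRep b)) k : (2 <= b)%nat ->
  INR (Isum (zz u) b k) + INR (Pn (ff u) b k) / INR (b ^ k) <= Rabs x ->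
  Rabs x < INR (Isum (zz u) b k) + INR (Pn (ff u) b k + 1) / INR (b ^ k) ->
  Rabs x < INR (Isum (zz u) b k) + 1 ->
  INR (Isum (zz v) b k) + INR (Pn (ff v) b k) / INR (b ^ k) <= Rabs y ->
  INR (Isum (zz v) b k) <= Rabs y ->
  cmpsel (Nat.compare (Isum (zz u) b k) (Isum (zz v) b k)) (Nat.compare (Pn (ff u) b k) (Pn (ff v) b k)) = Lt ->
  Rabs x < Rabs y.
Proof.
  intros Hb H1 H2 H3 H4 H5 Hc. unfold cmpsel in Hc.
  destruct (Nat.compare_spec (Isum (zz u) b k) (Isum (zz v) b k)) as [E|E|E]; try discriminate.
  - rewrite E in *. apply Nat.compare_lt_iff in Hc.
    assert (INR (Pn (ff u) b k + 1) / INR (b ^ k) <= INR (Pn (ff v) b k) / INR (b ^ k)).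
    { apply div_le_nat; try (apply Nat.neq_0_lt_0; apply Nat.pow_nonzero; lia). nia. }
    lra.
  - assert (INR (Isum (zz u) b k + 1) <= INR (Isum (zz v) b k)) by (apply le_INR; lia).
    rewrite plus_INR in H. simpl in H. lra.
Qed.


Inductive Pos := P0 | PI | PF.
Record Det := mkDet { pos : Pos; sg1 : bool; sg2 : bool; nz1 : bool; nz2 : bool;
  ln1 : bool; ln2 : bool; ci : comparison; cf : comparison }.
Definition nextpos (p : Pos) := match p with P0 => PI | PI => PF | PF => PI end.
Definition det0 := mkDet P0 false false false false false false Eq Eq.

Definition upd (b : nat) (d : Det) (a c : AlphaRep b) : Det :=
  mkDet (nextpos (pos d))
    (match pos d with P0 => isminus a | _ => sg1 d end)
    (match pos d with P0 => isminus c | _ => sg2 d end)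
    (nz1 d || match pos d with P0 => false | _ => negb (Nat.eqb (dig a) 0) end)
    (nz2 d || match pos d with P0 => false | _ => negb (Nat.eqb (dig c) 0) end)
    (match pos d with PF => Nat.ltb (dig a) (b - 1) | _ => false end)
    (match pos d with PF => Nat.ltb (dig c) (b - 1) | _ => false end)
    (match pos d with PI => cmpsel (Nat.compare (dig a) (dig c)) (ci d) | _ => ci d end)
    (match pos d with PF => cmpsel (cf d) (Nat.compare (dig a) (dig c)) | _ => cf d end).

Fixpoint traj (b : nat) (u v : oword (AlphaRep b)) (n : nat) : Det :=
  match n with 0 => det0 | S n => upd b (traj b u v n) (u n) (v n) end.

Definition verdict (d : Det) : comparison :=
  match sg1 d, sg2 d with
  | false, false => cmpsel (ci d) (cf d)
  | true, true => CompOpp (cmpsel (ci d) (cf d))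
  | false, true => Gt
  | true, false => Lt end.

Lemma traj_odd b (u v : oword (AlphaRep b)) k : (1 <= b)%nat ->
  pos (traj b u v (2 * k + 1)) = PI /\ sg1 (traj b u v (2 * k + 1)) = isminus (u 0%nat) /\
  sg2 (traj b u v (2 * k + 1)) = isminus (v 0%nat) /\
  ci (traj b u v (2 * k + 1)) = Nat.compare (Isum (zz u) b k) (Isum (zz v) b k) /\
  cf (traj b u v (2 * k + 1)) = Nat.compare (Pn (ff u) b k) (Pn (ff v) b k).
Proof.
  intros Hb. induction k.
  - simpl. auto.
  - replace (2 * S k + 1)%nat with (S (S (2 * k + 1))) by lia.
    destruct IHk as [H1 [H2 [H3 [H4 H5]]]].
    cbn [traj]. set (d := traj b u v (2 * k + 1)) in *.
    cbn [upd pos sg1 sg2 ci cf]. rewrite H1. cbn [nextpos].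
    split; auto. split; auto. split; auto. split.
    + rewrite H4. rewrite Isum_cmp by (intros; apply dig_lt; lia). reflexivity.
    + replace (S (2 * k + 1)) with (2 * k + 2)%nat by lia.
      rewrite H5. rewrite Pn_cmp by (intros; apply dig_lt; lia). reflexivity.
Qed.

Lemma traj_even b (u v : oword (AlphaRep b)) k : (1 <= b)%nat -> pos (traj b u v (2 * k + 2)) = PF.
Proof.
  intros Hb. replace (2 * k + 2)%nat with (S (2 * k + 1)) by lia. cbn [traj upd pos].
  rewrite (proj1 (traj_odd b u v k Hb)). reflexivity.
Qed.

Lemma nat_cases n : n = 0%nat \/ (exists k, n = 2 * k + 1)%nat \/ (exists k, n = 2 * k + 2)%nat.
Proof.
  induction n. auto. destruct IHn as [->|[[k ->]|[k ->]]].
  - right; left; exists 0%nat; lia.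
  - right; right; exists k; lia.
  - right; left; exists (S k); lia.
Qed.


Definition Acmp b (u v : oword (AlphaRep b)) k :=
  cmpsel (Nat.compare (Isum (zz u) b k) (Isum (zz v) b k)) (Nat.compare (Pn (ff u) b k) (Pn (ff v) b k)).

Lemma cmpsel_opp c1 c2 : cmpsel (CompOpp c1) (CompOpp c2) = CompOpp (cmpsel c1 c2).
Proof. destruct c1; reflexivity. Qed.

Lemma Acmp_swap b u v k : Acmp b v u k = CompOpp (Acmp b u v k).
Proof. unfold Acmp. rewrite (Nat.compare_antisym (Isum (zz u) b k)), (Nat.compare_antisym (Pn (ff u) b k)).
  apply cmpsel_opp. Qed.

Lemma cmpsel_Eq c1 c2 : cmpsel c1 c2 = Eq <-> c1 = Eq /\ c2 = Eq.
Proof. destruct c1, c2; simpl; split; intuition discriminate. Qed.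

Lemma verdict_odd b (u v : oword (AlphaRep b)) k : (1 <= b)%nat ->
  verdict (traj b u v (2 * k + 1)) =
  match isminus (u 0%nat), isminus (v 0%nat) with
  | false, false => Acmp b u v k | true, true => CompOpp (Acmp b u v k)
  | false, true => Gt | true, false => Lt end.
Proof.
  intros Hb. destruct (traj_odd b u v k Hb) as [_ [H2 [H3 [H4 H5]]]].
  unfold verdict. rewrite H2, H3, H4, H5. reflexivity.
Qed.

Lemma abs_A b x y u v : (2 <= b)%nat -> IsRep b x u -> IsRep b y v ->
  exists N, forall k, (N <= k)%nat ->
    (Acmp b u v k = Lt -> Rabs x < Rabs y) /\ (Acmp b u v k = Gt -> Rabs y < Rabs x).
Proof.
  intros Hb Hx Hy. destruct (abs_bounds b x u Hb Hx) as [N1 H1].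
  destruct (abs_bounds b y v Hb Hy) as [N2 H2].
  exists (max N1 N2). intros k Hk.
  destruct (H1 k ltac:(lia)) as [A1 [A2 [A3 A4]]]. destruct (H2 k ltac:(lia)) as [B1 [B2 [B3 B4]]].
  split; intros HA.
  - eapply abs_cmp_lt; eauto.
  - eapply (abs_cmp_lt b y x v u k); eauto. fold (Acmp b v u k). rewrite Acmp_swap, HA. reflexivity.
Qed.

Lemma Pn_eq_down b d e k j : (forall i, (d i < b)%nat) -> (forall i, (e i < b)%nat) ->
  (j <= k)%nat -> Pn d b k = Pn e b k -> Pn d b j = Pn e b j.
Proof.
  intros Hd He Hjk. induction Hjk; auto. intros H. apply IHHjk.
  assert (Nat.compare (Pn d b (S m)) (Pn e b (S m)) = Eq) by (apply Nat.compare_eq_iff; auto).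
  rewrite Pn_cmp in H0 by auto. apply cmpsel_Eq in H0. apply Nat.compare_eq_iff. apply H0.
Qed.

Lemma verdict_eventually b x y u v : (2 <= b)%nat -> IsRep b x u -> IsRep b y v ->
  exists T, forall k, (T <= k)%nat -> verdict (traj b u v (2 * k + 1)) = rcmp x y.
Proof.
  intros Hb Hx Hy.
  destruct (rep_info b x u Hb Hx) as [Sx [_ [_ [Nx [bx [HNx [Hbx [_ Hax]]]]]]]].
  destruct (rep_info b y v Hb Hy) as [Sy [_ [_ [Ny [by_ [HNy [Hby [_ Hay]]]]]]]].
  destruct (abs_A b x y u v Hb Hx Hy) as [NA HA].
  set (N := max NA (max Nx Ny)).
  set (V := fun k => verdict (traj b u v (2 * k + 1))).
  assert (HV : forall k, V k = match isminus (u 0%nat), isminus (v 0%nat) with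
     | false, false => Acmp b u v k | true, true => CompOpp (Acmp b u v k)
     | false, true => Gt | true, false => Lt end) by (intros; apply verdict_odd; lia).
  assert (Cl1 : forall k, (N <= k)%nat -> V k <> Eq -> V k = rcmp x y).
  { intros k Hk Hne. destruct (HA k ltac:(lia)) as [HL HG]. rewrite HV in *.
    destruct Sx as [[Sx1 Sx2]|[Sx1 Sx2]]; destruct Sy as [[Sy1 Sy2]|[Sy1 Sy2]];
      rewrite Sx1, Sy1 in *.
    - rewrite Rabs_pos_eq in HL, HG by auto. rewrite Rabs_pos_eq in HL, HG by auto.
      destruct (Acmp b u v k); try contradiction.
      + symmetry; apply rcmp_Lt; auto.
      + symmetry; apply rcmp_Gt; auto.
    - symmetry; apply rcmp_Gt; lra.
    - symmetry; apply rcmp_Lt; lra.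
    - rewrite Rabs_left in HL, HG by auto. rewrite Rabs_left in HL, HG by auto.
      destruct (Acmp b u v k); simpl in *; try contradiction.
      + specialize (HL eq_refl). symmetry; apply rcmp_Gt; lra.
      + specialize (HG eq_refl). symmetry; apply rcmp_Lt; lra. }
  assert (Cl2 : forall k, V k = Eq -> isminus (u 0%nat) = isminus (v 0%nat) /\ Acmp b u v k = Eq).
  { intros k H. rewrite HV in H. destruct (isminus (u 0%nat)), (isminus (v 0%nat)); try discriminate; split; auto.
    destruct (Acmp b u v k); auto; discriminate. }
  assert (Cl3 : forall k, isminus (u 0%nat) = isminus (v 0%nat) -> Acmp b u v k = Eq -> V k = Eq).
  { intros k H1 H2. rewrite HV, <- H1, H2. destruct (isminus (u 0%nat)); reflexivity. }
  assert (Hdu : forall i, (ff u i < b)%nat) by (intros; apply dig_lt; lia).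
  assert (Hdv : forall i, (ff v i < b)%nat) by (intros; apply dig_lt; lia).
  assert (Istab : forall k, (N <= k)%nat -> Isum (zz u) b k = Isum (zz u) b N /\ Isum (zz v) b k = Isum (zz v) b N).
  { intros k Hk. split.
    - replace k with (N + (k - N))%nat by lia. apply Isum_stable. intros; apply HNx; lia.
    - replace k with (N + (k - N))%nat by lia. apply Isum_stable. intros; apply HNy; lia. }
  assert (Amono : forall k k0, (N <= k0)%nat -> (k0 <= k)%nat -> Acmp b u v k = Eq -> Acmp b u v k0 = Eq).
  { intros k k0 Hk0 Hk H. unfold Acmp in *. apply cmpsel_Eq in H. destruct H as [H1 H2].
    apply Nat.compare_eq_iff in H1, H2. apply cmpsel_Eq. split; apply Nat.compare_eq_iff.
    - destruct (Istab k ltac:(lia)), (Istab k0 ltac:(lia)). lia.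
    - eapply Pn_eq_down; eauto. }
  destruct (rcmp_spec x y) as [[Er Hr]|[[Er Hr]|[Er Hr]]].
  3,1: destruct (classic (exists k0, (N <= k0)%nat /\ V k0 <> Eq)) as [[k0 [Hk0 Hne]]|Hno];
    [ exists k0; intros k Hk; apply Cl1; [lia|]; intros HE;
      destruct (Cl2 k HE) as [Hs HAk]; apply Hne; apply Cl3; auto; eapply Amono; eauto
    | exfalso ].
  3:{ exists N. intros k Hk. change (V k = rcmp x y).
      destruct (classic (V k = Eq)) as [E|E]; [congruence | apply Cl1; auto]. }
  all: assert (Hall : forall k, (N <= k)%nat -> V k = Eq) by
     (intros k Hk; apply NNPP; intros C; apply Hno; exists k; auto).
  all: destruct (Cl2 N (Hall N (le_n _))) as [Hsg _].
  all: assert (HP : forall k, Pn (ff u) b k = Pn (ff v) b k).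
  all: try (intros k; apply (Pn_eq_down b _ _ (max k N) k Hdu Hdv ltac:(lia));
        destruct (Cl2 _ (Hall (max k N) ltac:(lia))) as [_ HA2]; unfold Acmp in HA2;
        apply cmpsel_Eq in HA2; apply Nat.compare_eq_iff; apply HA2).
  all: assert (Hff : ff u = ff v) by
     (apply functional_extensionality; intros i; pose proof (HP i) as HPi; specialize (HP (S i)); simpl in HP;
      pose proof (Hdu i); pose proof (Hdv i); rewrite HPi in HP; lia).
  all: rewrite Hff in Hbx; pose proof (uniqueness_sum _ _ _ Hbx Hby) as Ebb.
  all: destruct (Cl2 N (Hall N (le_n _))) as [_ HAN]; unfold Acmp in HAN; apply cmpsel_Eq in HAN;
       destruct HAN as [HAN _]; apply Nat.compare_eq_iff in HAN.
  all: assert (Rabs x = Rabs y) by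
     (rewrite Hax, Hay; f_equal; [| auto]; f_equal;
      rewrite <- (Isum_stable (zz u) b Nx (N - Nx)) by auto;
      rewrite <- (Isum_stable (zz v) b Ny (N - Ny)) by auto;
      replace (Nx + (N - Nx))%nat with N by lia; replace (Ny + (N - Ny))%nat with N by lia; auto).
  all: destruct Sx as [[Sx1 Sx2]|[Sx1 Sx2]]; destruct Sy as [[Sy1 Sy2]|[Sy1 Sy2]];
       rewrite Sx1, Sy1 in Hsg; try discriminate.
  all: try (rewrite Rabs_pos_eq in H by auto; rewrite Rabs_pos_eq in H by auto; lra).
  all: rewrite Rabs_left in H by auto; rewrite Rabs_left in H by auto; lra.
Qed.


Definition goodc (r : Rel) (c : comparison) : Prop :=
  match r with
  | Rle' => c <> Gt | Rlt' => c = Lt | Rge' => c <> Lt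
  | Rgt' => c = Gt | Req' => c = Eq | Rneq' => c <> Eq end.

Lemma goodc_rel r x y : goodc r (rcmp x y) <-> relR r x y.
Proof.
  destruct (rcmp_spec x y) as [[E H]|[[E H]|[E H]]]; rewrite E; destruct r; simpl;
  split; intros; try discriminate; try lra; auto; congruence.
Qed.

Lemma nz1_mono b (u v : oword (AlphaRep b)) n m : (n <= m)%nat -> nz1 (traj b u v n) = true -> nz1 (traj b u v m) = true.
Proof.
  intros H. induction H; auto. intros Hn. cbn [traj upd nz1]. rewrite IHle; auto.
Qed.
Lemma nz2_mono b (u v : oword (AlphaRep b)) n m : (n <= m)%nat -> nz2 (traj b u v n) = true -> nz2 (traj b u v m) = true.
Proof.
  intros H. induction H; auto. intros Hn. cbn [traj upd nz2]. rewrite IHle; auto.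
Qed.

Lemma pos_traj b (u v : oword (AlphaRep b)) n : (1 <= b)%nat ->
  (n = 0%nat /\ pos (traj b u v n) = P0) \/ (exists k, n = 2 * k + 1 /\ pos (traj b u v n) = PI)%nat \/
  (exists k, n = 2 * k + 2 /\ pos (traj b u v n) = PF)%nat.
Proof.
  intros Hb. destruct (nat_cases n) as [->|[[k ->]|[k ->]]].
  - left; auto.
  - right; left; exists k; split; auto. apply traj_odd; auto.
  - right; right; exists k; split; auto. apply traj_even; auto.
Qed.

Lemma nz1_fwd b (u v : oword (AlphaRep b)) n : (1 <= b)%nat -> nz1 (traj b u v n) = true ->
  exists k, zz u k <> 0%nat \/ ff u k <> 0%nat.
Proof.
  intros Hb. induction n. discriminate. cbn [traj upd nz1]. intros H.
  apply Bool.orb_true_iff in H. destruct H as [H|H]; auto.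
  destruct (pos_traj b u v n Hb) as [[-> E]|[[k [-> E]]|[k [-> E]]]]; rewrite E in H; try discriminate.
  - exists k; left. unfold zz. apply Bool.negb_true_iff, Nat.eqb_neq in H. auto.
  - exists k; right. unfold ff. apply Bool.negb_true_iff, Nat.eqb_neq in H. auto.
Qed.
Lemma nz2_fwd b (u v : oword (AlphaRep b)) n : (1 <= b)%nat -> nz2 (traj b u v n) = true ->
  exists k, zz v k <> 0%nat \/ ff v k <> 0%nat.
Proof.
  intros Hb. induction n. discriminate. cbn [traj upd nz2]. intros H.
  apply Bool.orb_true_iff in H. destruct H as [H|H]; auto.
  destruct (pos_traj b u v n Hb) as [[-> E]|[[k [-> E]]|[k [-> E]]]]; rewrite E in H; try discriminate.
  - exists k; left. unfold zz. apply Bool.negb_true_iff, Nat.eqb_neq in H. auto.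
  - exists k; right. unfold ff. apply Bool.negb_true_iff, Nat.eqb_neq in H. auto.
Qed.

Lemma nz1_bwd b (u v : oword (AlphaRep b)) k : (1 <= b)%nat -> zz u k <> 0%nat \/ ff u k <> 0%nat ->
  nz1 (traj b u v (2 * k + 3)) = true.
Proof.
  intros Hb [H|H].
  - apply (nz1_mono _ _ _ (2 * k + 2)). lia. replace (2 * k + 2)%nat with (S (2 * k + 1)) by lia.
    cbn [traj upd nz1]. rewrite (proj1 (traj_odd b u v k Hb)). apply Bool.orb_true_iff. right.
    apply Bool.negb_true_iff, Nat.eqb_neq. auto.
  - replace (2 * k + 3)%nat with (S (2 * k + 2)) by lia.
    cbn [traj upd nz1]. rewrite (traj_even b u v k Hb). apply Bool.orb_true_iff. right.
    apply Bool.negb_true_iff, Nat.eqb_neq. auto.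
Qed.
Lemma nz2_bwd b (u v : oword (AlphaRep b)) k : (1 <= b)%nat -> zz v k <> 0%nat \/ ff v k <> 0%nat ->
  nz2 (traj b u v (2 * k + 3)) = true.
Proof.
  intros Hb [H|H].
  - apply (nz2_mono _ _ _ (2 * k + 2)). lia. replace (2 * k + 2)%nat with (S (2 * k + 1)) by lia.
    cbn [traj upd nz2]. rewrite (proj1 (traj_odd b u v k Hb)). apply Bool.orb_true_iff. right.
    apply Bool.negb_true_iff, Nat.eqb_neq. auto.
  - replace (2 * k + 3)%nat with (S (2 * k + 2)) by lia.
    cbn [traj upd nz2]. rewrite (traj_even b u v k Hb). apply Bool.orb_true_iff. right.
    apply Bool.negb_true_iff, Nat.eqb_neq. auto.
Qed.

Lemma ln1_fwd b (u v : oword (AlphaRep b)) n : (1 <= b)%nat -> ln1 (traj b u v n) = true ->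
  exists k, (2 * k + 3 = n)%nat /\ (ff u k < b - 1)%nat.
Proof.
  intros Hb. destruct n. discriminate. cbn [traj upd ln1]. intros H.
  destruct (pos_traj b u v n Hb) as [[-> E]|[[k [-> E]]|[k [-> E]]]]; rewrite E in H; try discriminate.
  exists k. split. lia. apply Nat.ltb_lt in H. auto.
Qed.
Lemma ln2_fwd b (u v : oword (AlphaRep b)) n : (1 <= b)%nat -> ln2 (traj b u v n) = true ->
  exists k, (2 * k + 3 = n)%nat /\ (ff v k < b - 1)%nat.
Proof.
  intros Hb. destruct n. discriminate. cbn [traj upd ln2]. intros H.
  destruct (pos_traj b u v n Hb) as [[-> E]|[[k [-> E]]|[k [-> E]]]]; rewrite E in H; try discriminate.
  exists k. split. lia. apply Nat.ltb_lt in H. auto.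
Qed.
Lemma ln1_bwd b (u v : oword (AlphaRep b)) k : (1 <= b)%nat -> (ff u k < b - 1)%nat -> ln1 (traj b u v (2 * k + 3)) = true.
Proof.
  intros Hb H. replace (2 * k + 3)%nat with (S (2 * k + 2)) by lia.
  cbn [traj upd ln1]. rewrite (traj_even b u v k Hb). apply Nat.ltb_lt. auto.
Qed.
Lemma ln2_bwd b (u v : oword (AlphaRep b)) k : (1 <= b)%nat -> (ff v k < b - 1)%nat -> ln2 (traj b u v (2 * k + 3)) = true.
Proof.
  intros Hb H. replace (2 * k + 3)%nat with (S (2 * k + 2)) by lia.
  cbn [traj upd ln2]. rewrite (traj_even b u v k Hb). apply Nat.ltb_lt. auto.
Qed.

Definition getd {b} (H : (0 < b)%nat) (a : AlphaRep b) : Digit b :=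
  match a with ADig d => d | _ => exist _ 0%nat H end.

Lemma Isum_mono z b n m : (n <= m)%nat -> (Isum z b n <= Isum z b m)%nat.
Proof. intros H; induction H; simpl; lia. Qed.

Lemma word_rep b (u : oword (AlphaRep b)) : (2 <= b)%nat ->
  (u 0%nat = APlus \/ u 0%nat = AMinus) ->
  (forall k, exists d, u (2 * k + 1)%nat = ADig d) -> (forall k, exists d, u (2 * k + 2)%nat = ADig d) ->
  (exists N, forall i, (N <= i)%nat -> zz u i = 0%nat) ->
  (forall M, exists i, (M <= i)%nat /\ ff u i <> (b - 1)%nat) ->
  (u 0%nat = AMinus -> exists k, zz u k <> 0%nat \/ ff u k <> 0%nat) ->
  exists x, IsRep b x u.
Proof.
  intros Hb Hs Hz Hf [N HN] Hnm Hnz.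
  assert (H0 : (0 < b)%nat) by lia.
  assert (Hd : forall i, (ff u i < b)%nat) by (intros; apply dig_lt; lia).
  destruct (frac_exists (ff u) b ltac:(lia) Hd) as [bb Hbb].
  set (a := INR (Isum (zz u) b N)).
  assert (Hbb0 : 0 <= bb).
  { pose proof (frac_lower (ff u) b bb 0 ltac:(lia) Hbb). simpl in H. unfold Rdiv in H. lra. }
  assert (Ha0 : 0 <= a) by apply pos_INR.
  assert (Hpos : u 0%nat = AMinus -> 0 < a + bb).
  { intros Hm. destruct (Hnz Hm) as [k [Hk|Hk]].
    - assert (1 <= Isum (zz u) b N)%nat.
      { pose proof (Isum_mono (zz u) b (S k) (max N (S k)) ltac:(lia)).
        replace (max N (S k)) with (N + (max N (S k) - N))%nat in H by lia.
        rewrite Isum_stable in H by auto. cbn [Isum] in H.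
        assert (1 <= b ^ k)%nat by (apply Nat.neq_0_lt_0; apply Nat.pow_nonzero; lia). nia. }
      apply le_INR in H. simpl in H. unfold a. lra.
    - pose proof (frac_lower (ff u) b bb (S k) ltac:(lia) Hbb).
      assert (0 < INR (Pn (ff u) b (S k)) / INR (b ^ S k)).
      { apply Rdiv_lt_0_compat. apply lt_0_INR. simpl. lia. apply INR_pow_pos. lia. }
      lra. }
  exists (if isminus (u 0%nat) then - (a + bb) else a + bb).
  exists (fun k => getd H0 (u (2 * k + 1)%nat)), (fun k => getd H0 (u (2 * k + 2)%nat)).
  split; [|split; [|split; [|split]]].
  - destruct Hs as [E|E]; rewrite E; simpl; [left|right]; split; auto; try (specialize (Hpos E)); lra.
  - intros k. destruct (Hz k) as [d1 E1]. destruct (Hf k) as [d2 E2]. rewrite E1, E2. auto.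
  - exists N. intros i Hi. specialize (HN i Hi). unfold zz in HN. destruct (Hz i) as [d E].
    rewrite E in *. auto.
  - intros [M HM]. destruct (Hnm M) as [i [Hi Hne]]. apply Hne. specialize (HM i Hi).
    unfold ff. destruct (Hf i) as [d E]. rewrite E in *. auto.
  - exists a, bb. split; [|split].
    + replace (fun i => INR (dval (getd H0 (u (2 * i + 1)%nat))) * INR b ^ i)
        with (fun i => INR (zz u i) * INR b ^ i).
      apply int_sum; auto.
      apply functional_extensionality. intros i. unfold zz. destruct (Hz i) as [d E]. rewrite E. auto.
    + replace (fun i => INR (dval (getd H0 (u (2 * i + 2)%nat))) / INR b ^ S i) with (fterm (ff u) b); auto.
      apply functional_extensionality. intros i. unfold fterm, ff. destruct (Hf i) as [d E]. rewrite E. auto.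
    + destruct Hs as [E|E]; rewrite E; simpl.
      * rewrite Rabs_pos_eq; lra.
      * rewrite Rabs_Ropp, Rabs_pos_eq; lra.
Qed.


Lemma FT_Pos : FiniteType Pos.
Proof. exists (P0 :: PI :: PF :: nil). intros []; simpl; auto. Qed.
Lemma FT_cmp : FiniteType comparison.
Proof. exists (Eq :: Lt :: Gt :: nil). intros []; simpl; auto. Qed.

Lemma FT_Det : FiniteType Det.
Proof.
  apply (FT_surj (Pos * bool * bool * bool * bool * bool * bool * comparison * comparison)
    Det (fun t => match t with (p, a1, a2, a3, a4, a5, a6, c1, c2) => mkDet p a1 a2 a3 a4 a5 a6 c1 c2 end)).
  - repeat apply FT_prod; auto using FT_Pos, FT_bool, FT_cmp.
  - intros [p a1 a2 a3 a4 a5 a6 c1 c2]. exists (p, a1, a2, a3, a4, a5, a6, c1, c2). reflexivity.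
Qed.

Record Cst {Al : Type} (B : Buchi Al) := mkC { cq1 : bstate B; cq2 : bstate B; cd : Det; cz1 : bool; cz2 : bool }.
Arguments mkC {Al B}. Arguments cq1 {Al B}. Arguments cq2 {Al B}. Arguments cd {Al B}.
Arguments cz1 {Al B}. Arguments cz2 {Al B}.

Lemma FT_Cst {Al} (B : Buchi Al) : FiniteType (Cst B).
Proof.
  apply (FT_surj (bstate B * bstate B * Det * bool * bool) (Cst B)
    (fun t => match t with (q1, q2, d, z1, z2) => mkC q1 q2 d z1 z2 end)).
  - repeat apply FT_prod; auto using FT_Det, FT_bool, bstate_finite.
  - intros [q1 q2 d z1 z2]. exists (q1, q2, d, z1, z2). reflexivity.
Qed.

Definition okl {b} (p : Pos) (a : AlphaRep b) : Prop :=
  match p with P0 => a = APlus \/ a = AMinus | _ => exists d, a = ADig d end.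

Definition I0 {Sg b} (B : Buchi (Sg * AlphaRep b)) (s : Cst B) : Prop :=
  binit B (cq1 s) /\ binit B (cq2 s) /\ cd s = det0.

Definition Dstep {Sg b} (B : Buchi (Sg * AlphaRep b)) (s : Cst B) (x : Sg * Sg) (s' : Cst B)
  (u v : AlphaRep b) : Prop :=
  bdelta B (cq1 s) (fst x, u) (cq1 s') /\ bdelta B (cq2 s) (snd x, v) (cq2 s') /\
  cd s' = upd b (cd s) u v /\ okl (pos (cd s)) u /\ okl (pos (cd s)) v /\
  (cz1 s = true -> cz1 s' = true) /\ (cz2 s = true -> cz2 s' = true) /\
  (cz1 s = true -> pos (cd s) = PI -> dig u = 0%nat) /\ (cz2 s = true -> pos (cd s) = PI -> dig v = 0%nat).

Definition D0 {Sg b} (B : Buchi (Sg * AlphaRep b)) (s : Cst B) (x : Sg * Sg) (s' : Cst B) : Prop :=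
  exists u v, Dstep B s x s' u v.

Definition C0 {Sg b} (B : Buchi (Sg * AlphaRep b)) (r : Rel) (s : Cst B) : Prop :=
  pos (cd s) = PI /\ goodc r (verdict (cd s)) /\ cz1 s = true /\ cz2 s = true /\
  (sg1 (cd s) = false \/ nz1 (cd s) = true) /\ (sg2 (cd s) = false \/ nz2 (cd s) = true).
Definition C1 {Sg b} (B : Buchi (Sg * AlphaRep b)) (s : Cst B) : Prop := bacc B (cq1 s).
Definition C2 {Sg b} (B : Buchi (Sg * AlphaRep b)) (s : Cst B) : Prop := bacc B (cq2 s).
Definition C3 {Sg b} (B : Buchi (Sg * AlphaRep b)) (s : Cst B) : Prop := ln1 (cd s) = true.
Definition C4 {Sg b} (B : Buchi (Sg * AlphaRep b)) (s : Cst B) : Prop := ln2 (cd s) = true.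

Lemma inf_mono (p q : nat -> Prop) : (forall i, p i -> q i) -> inf p -> inf q.
Proof. intros H Hp n. destruct (Hp n) as [m [Hm Hpm]]. exists m; auto. Qed.

Lemma inf_after (p : nat -> Prop) n : inf p -> exists m, (n <= m)%nat /\ p m.
Proof. intros H; apply H. Qed.

Lemma rep_sign b x u : IsRep b x u -> u 0%nat = APlus \/ u 0%nat = AMinus.
Proof. intros [z [fr [[[_ H]|[_ H]] _]]]; auto. Qed.

Lemma rep_nonzero b x u : (2 <= b)%nat -> IsRep b x u -> x <> 0 -> exists k, zz u k <> 0%nat \/ ff u k <> 0%nat.
Proof.
  intros Hb Hx Hne. apply NNPP. intros Hc.
  destruct (rep_info b x u Hb Hx) as [_ [_ [_ [N [bb [_ [Hbb [_ Habs]]]]]]]].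
  assert (Hz : forall k, zz u k = 0%nat) by (intros k; apply NNPP; intros C; apply Hc; exists k; auto).
  assert (Hf : forall k, ff u k = 0%nat) by (intros k; apply NNPP; intros C; apply Hc; exists k; auto).
  assert (HI : forall n, Isum (zz u) b n = 0%nat) by (induction n; simpl; auto; rewrite IHn, Hz; lia).
  assert (Hs0 : infinite_sum (fterm (ff u) b) 0).
  { assert (Ht : forall i, fterm (ff u) b i = 0) by (intros; unfold fterm; rewrite Hf; simpl; unfold Rdiv; ring).
    assert (Hsz : forall n, sum_f_R0 (fterm (ff u) b) n = 0).
    { induction n; cbn [sum_f_R0]; rewrite Ht; [|rewrite IHn]; ring. }
    intros eps He. exists 0%nat. intros n _. unfold R_dist. rewrite Hsz, Rminus_0_r, Rabs_R0; auto. }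
  pose proof (uniqueness_sum _ _ _ Hbb Hs0). rewrite HI in Habs. simpl in Habs.
  apply Hne. destruct (Rcase_abs x) as [Hl|Hl]; [rewrite Rabs_left in Habs by auto | rewrite Rabs_pos_eq in Habs by lra]; lra.
Qed.


Lemma pos_PI b (u v : oword (AlphaRep b)) n : (1 <= b)%nat -> pos (traj b u v n) = PI -> exists k, n = (2 * k + 1)%nat.
Proof.
  intros Hb H. destruct (pos_traj b u v n Hb) as [[_ E]|[[k [E _]]|[k [_ E]]]]; try congruence. eauto.
Qed.

Lemma core_fwd {Sg : Type} beta (Hb : (2 <= beta)%nat) (B : Buchi (Sg * AlphaRep beta)) (f : oword Sg -> R)
  (HB : forall A x w, IsRep beta x w -> (accepts B (zipw A w) <-> f A = x)) r (A C : oword Sg) (s : nat -> Cst B) :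
  isrun (I0 B) (D0 B) (zipw A C) s -> inf (fun i => C0 B r (s i)) -> inf (fun i => C1 B (s i)) ->
  inf (fun i => C2 B (s i)) -> inf (fun i => C3 B (s i)) -> inf (fun i => C4 B (s i)) -> relR r (f A) (f C).
Proof.
  intros [Hi Hd] H0 H1 H2 H3 H4.
  assert (Hd' : forall i, exists p : AlphaRep beta * AlphaRep beta, Dstep B (s i) (zipw A C i) (s (S i)) (fst p) (snd p)).
  { intros i. destruct (Hd i) as [u [v H]]. exists (u, v). auto. }
  set (U := fun i => proj1_sig (constructive_indefinite_description _ (Hd' i))).
  assert (HU : forall i, Dstep B (s i) (zipw A C i) (s (S i)) (fst (U i)) (snd (U i))).
  { intros i. unfold U. destruct (constructive_indefinite_description _ _). auto. }
  set (u := fun i => fst (U i)). set (v := fun i => snd (U i)).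
  assert (Hb1 : (1 <= beta)%nat) by lia.
  assert (Hdet : forall i, cd (s i) = traj beta u v i).
  { induction i. apply Hi. destruct (HU i) as [_ [_ [E _]]]. rewrite E, IHi. reflexivity. }
  assert (Hz1 : forall n m, (n <= m)%nat -> cz1 (s n) = true -> cz1 (s m) = true).
  { intros n m Hnm. induction Hnm; auto. intros Hn. apply (HU m). auto. }
  assert (Hz2 : forall n m, (n <= m)%nat -> cz2 (s n) = true -> cz2 (s m) = true).
  { intros n m Hnm. induction Hnm; auto. intros Hn. apply (HU m). auto. }
  assert (Hsign : (u 0%nat = APlus \/ u 0%nat = AMinus) /\ (v 0%nat = APlus \/ v 0%nat = AMinus)).
  { destruct (HU 0%nat) as [_ [_ [_ [Ho1 [Ho2 _]]]]]. rewrite Hdet in Ho1, Ho2. simpl in Ho1, Ho2. auto. }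
  assert (Hdig : forall k, (exists d, u (2 * k + 1)%nat = ADig d) /\ (exists d, v (2 * k + 1)%nat = ADig d) /\
                           (exists d, u (2 * k + 2)%nat = ADig d) /\ (exists d, v (2 * k + 2)%nat = ADig d)).
  { intros k. destruct (HU (2 * k + 1)%nat) as [_ [_ [_ [Ho1 [Ho2 _]]]]].
    destruct (HU (2 * k + 2)%nat) as [_ [_ [_ [Ho3 [Ho4 _]]]]].
    rewrite Hdet, (proj1 (traj_odd beta u v k Hb1)) in Ho1, Ho2.
    rewrite Hdet, (traj_even beta u v k Hb1) in Ho3, Ho4. simpl in *. auto. }
  destruct (H0 0%nat) as [n0 [_ [Hp0 [_ [Hc1 [Hc2 [Hs1 Hs2]]]]]]].
  rewrite Hdet in Hp0, Hs1, Hs2.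
  destruct (pos_PI beta u v n0 Hb1 Hp0) as [k0 Ek0].
  assert (Hsg : sg1 (traj beta u v n0) = isminus (u 0%nat) /\ sg2 (traj beta u v n0) = isminus (v 0%nat)).
  { rewrite Ek0. destruct (traj_odd beta u v k0 Hb1) as [_ [E1 [E2 _]]]. auto. }
  assert (Hzu : exists N, forall i, (N <= i)%nat -> zz u i = 0%nat).
  { exists n0. intros i Hii. destruct (HU (2 * i + 1)%nat) as [_ [_ [_ [_ [_ [_ [_ [Hq _]]]]]]]].
    apply Hq. apply (Hz1 n0); auto; lia. rewrite Hdet. apply traj_odd; auto. }
  assert (Hzv : exists N, forall i, (N <= i)%nat -> zz v i = 0%nat).
  { exists n0. intros i Hii. destruct (HU (2 * i + 1)%nat) as [_ [_ [_ [_ [_ [_ [_ [_ Hq]]]]]]]].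
    apply Hq. apply (Hz2 n0); auto; lia. rewrite Hdet. apply traj_odd; auto. }
  assert (Hmu : forall M, exists i, (M <= i)%nat /\ ff u i <> (beta - 1)%nat).
  { intros M. destruct (H3 (2 * M + 3)%nat) as [m [Hm Hl]]. unfold C3 in Hl. rewrite Hdet in Hl.
    destruct (ln1_fwd beta u v m Hb1 Hl) as [k [Ek Hk]]. exists k. split; lia. }
  assert (Hmv : forall M, exists i, (M <= i)%nat /\ ff v i <> (beta - 1)%nat).
  { intros M. destruct (H4 (2 * M + 3)%nat) as [m [Hm Hl]]. unfold C4 in Hl. rewrite Hdet in Hl.
    destruct (ln2_fwd beta u v m Hb1 Hl) as [k [Ek Hk]]. exists k. split; lia. }
  assert (Hnu : u 0%nat = AMinus -> exists k, zz u k <> 0%nat \/ ff u k <> 0%nat).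
  { intros E. destruct Hs1 as [Hs1|Hs1].
    - rewrite (proj1 Hsg), E in Hs1. discriminate.
    - eapply nz1_fwd; eauto. }
  assert (Hnv : v 0%nat = AMinus -> exists k, zz v k <> 0%nat \/ ff v k <> 0%nat).
  { intros E. destruct Hs2 as [Hs2|Hs2].
    - rewrite (proj2 Hsg), E in Hs2. discriminate.
    - eapply nz2_fwd; eauto. }
  destruct (word_rep beta u Hb (proj1 Hsign) (fun k => proj1 (Hdig k)) (fun k => proj1 (proj2 (proj2 (Hdig k))))
     Hzu Hmu Hnu) as [x Hx].
  destruct (word_rep beta v Hb (proj2 Hsign) (fun k => proj1 (proj2 (Hdig k))) (fun k => proj2 (proj2 (proj2 (Hdig k))))
     Hzv Hmv Hnv) as [y Hy].
  assert (EA : f A = x).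
  { apply (HB A x u Hx). exists (fun i => cq1 (s i)). split; [apply Hi|split].
    - intros i. apply (HU i).
    - apply H1. }
  assert (EC : f C = y).
  { apply (HB C y v Hy). exists (fun i => cq2 (s i)). split; [apply Hi|split].
    - intros i. apply (HU i).
    - apply H2. }
  rewrite EA, EC. apply goodc_rel.
  destruct (verdict_eventually beta x y u v Hb Hx Hy) as [T HT].
  destruct (H0 (2 * T + 1)%nat) as [m [Hm [Hpm [Hgm _]]]]. rewrite Hdet in Hpm, Hgm.
  destruct (pos_PI beta u v m Hb1 Hpm) as [k Ek]. subst m. rewrite HT in Hgm; auto. lia.
Qed.

Lemma notev_inf b (u : oword (AlphaRep b)) : (1 <= b)%nat ->
  ~ (exists M, forall i, (M <= i)%nat -> ff u i = (b - 1)%nat) ->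
  forall n, exists k, (n <= k)%nat /\ (ff u k < b - 1)%nat.
Proof.
  intros Hb H n. apply NNPP. intros C. apply H. exists n. intros i Hi.
  pose proof (dig_lt (u (2 * i + 2)%nat) Hb). fold (ff u i) in H0.
  destruct (Nat.eq_dec (ff u i) (b - 1)); auto. exfalso. apply C. exists i. split; auto. lia.
Qed.

Lemma core_bwd {Sg : Type} beta (Hb : (2 <= beta)%nat) (B : Buchi (Sg * AlphaRep beta)) (f : oword Sg -> R)
  (HB : forall A x w, IsRep beta x w -> (accepts B (zipw A w) <-> f A = x)) r (A C : oword Sg) :
  relR r (f A) (f C) -> exists s : nat -> Cst B,
  isrun (I0 B) (D0 B) (zipw A C) s /\ inf (fun i => C0 B r (s i)) /\ inf (fun i => C1 B (s i)) /\
  inf (fun i => C2 B (s i)) /\ inf (fun i => C3 B (s i)) /\ inf (fun i => C4 B (s i)).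
Proof.
  intros Hrel. assert (Hb1 : (1 <= beta)%nat) by lia.
  destruct (rep_exists beta (f A) Hb) as [u Hx]. destruct (rep_exists beta (f C) Hb) as [v Hy].
  destruct (proj2 (HB A (f A) u Hx) eq_refl) as [p1 [Hp1i [Hp1d Hp1a]]].
  destruct (proj2 (HB C (f C) v Hy) eq_refl) as [p2 [Hp2i [Hp2d Hp2a]]].
  destruct (rep_info beta (f A) u Hb Hx) as [Sx [Dux [Duf [Nu [bu [HNu [_ [Hnu _]]]]]]]].
  destruct (rep_info beta (f C) v Hb Hy) as [Sy [Dvx [Dvf [Nv [bv [HNv [_ [Hnv _]]]]]]]].
  set (Z := (2 * (Nu + Nv))%nat).
  exists (fun i => mkC (p1 i) (p2 i) (traj beta u v i) (Nat.leb Z i) (Nat.leb Z i)).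
  split; [split|split; [|split; [|split; [|split]]]].
  - repeat split; auto.
  - intros i. exists (u i), (v i). cbn [cq1 cq2 cd cz1 cz2].
    split; [apply Hp1d|split; [apply Hp2d|split; [reflexivity|]]].
    assert (Hok : okl (pos (traj beta u v i)) (u i) /\ okl (pos (traj beta u v i)) (v i)).
    { destruct (pos_traj beta u v i Hb1) as [[-> E]|[[k [-> E]]|[k [-> E]]]]; rewrite E; simpl.
      - split; eapply rep_sign; eauto.
      - split; [apply Dux|apply Dvx].
      - split; [apply Duf|apply Dvf]. }
    destruct Hok as [Ho1 Ho2]. split; auto. split; auto.
    split; [intros H; apply Nat.leb_le in H; apply Nat.leb_le; lia|].
    split; [intros H; apply Nat.leb_le in H; apply Nat.leb_le; lia|].
    split; intros H Hp; apply Nat.leb_le in H; destruct (pos_PI beta u v i Hb1 Hp) as [k ->].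
    + apply (HNu k). lia.
    + apply (HNv k). lia.
  - intros n. destruct (verdict_eventually beta (f A) (f C) u v Hb Hx Hy) as [T HT].
    assert (Hk1 : exists k1, isminus (u 0%nat) = false \/ nz1 (traj beta u v (2 * k1 + 3)) = true).
    { destruct (isminus (u 0%nat)) eqn:E.
      - destruct Sx as [[E1 _]|[_ Hl]]. congruence.
        destruct (rep_nonzero beta (f A) u Hb Hx ltac:(lra)) as [k Hk]. exists k. right. apply nz1_bwd; auto.
      - exists 0%nat. auto. }
    assert (Hk2 : exists k2, isminus (v 0%nat) = false \/ nz2 (traj beta u v (2 * k2 + 3)) = true).
    { destruct (isminus (v 0%nat)) eqn:E.
      - destruct Sy as [[E1 _]|[_ Hl]]. congruence.
        destruct (rep_nonzero beta (f C) v Hb Hy ltac:(lra)) as [k Hk]. exists k. right. apply nz2_bwd; auto.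
      - exists 0%nat. auto. }
    destruct Hk1 as [k1 Hk1]. destruct Hk2 as [k2 Hk2].
    set (K := (n + T + Z + k1 + k2 + 2)%nat).
    exists (2 * K + 1)%nat. split. lia.
    destruct (traj_odd beta u v K Hb1) as [Ep [Es1 [Es2 _]]].
    unfold C0. cbn [cd cz1 cz2]. split; auto. split.
    { rewrite HT by lia. apply goodc_rel; auto. }
    split. apply Nat.leb_le; lia. split. apply Nat.leb_le; lia.
    split.
    + rewrite Es1. destruct Hk1 as [Hk1|Hk1]; auto. right. apply (nz1_mono _ _ _ (2 * k1 + 3)); auto. lia.
    + rewrite Es2. destruct Hk2 as [Hk2|Hk2]; auto. right. apply (nz2_mono _ _ _ (2 * k2 + 3)); auto. lia.
  - exact Hp1a.
  - exact Hp2a.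
  - intros n. destruct (notev_inf beta u Hb1 Hnu n) as [k [Hk Hk']]. exists (2 * k + 3)%nat. split. lia.
    unfold C3. cbn [cd]. apply ln1_bwd; auto.
  - intros n. destruct (notev_inf beta v Hb1 Hnv n) as [k [Hk Hk']]. exists (2 * k + 3)%nat. split. lia.
    unfold C4. cbn [cd]. apply ln2_bwd; auto.
Qed.


Theorem theorem3 (mu beta : nat) (Hmu : (0 < mu)%nat) (Hbeta : (2 <= beta)%nat)
  (f : oword (Sig mu) -> R) :
  omega_regular_fun beta f ->
  forall r : Rel, omega_regular_comparator f r.
Proof.
  intros [B HB] r.
  set (I1 := I2 (I0 B)). set (D1 := D2 (D0 B) (C0 B r) (C1 B)). set (A1 := Acc2 (C1 B)).
  set (Q2 := fun s : Cst B * bool => C2 B (fst s)).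
  set (I2' := I2 I1). set (D2' := D2 D1 A1 Q2). set (A2 := Acc2 Q2).
  set (Q3 := fun s : (Cst B * bool) * bool => C3 B (fst (fst s))).
  set (I3 := I2 I2'). set (D3 := D2 D2' A2 Q3). set (A3 := Acc2 Q3).
  set (Q4 := fun s : ((Cst B * bool) * bool) * bool => C4 B (fst (fst (fst s)))).
  set (I4 := I2 I3). set (D4 := D2 D3 A3 Q4). set (A4 := Acc2 Q4).
  assert (FT : FiniteType ((((Cst B * bool) * bool) * bool) * bool)).
  { repeat apply FT_prod; auto using FT_Cst, FT_bool. }
  exists (@mkBuchi _ ((((Cst B * bool) * bool) * bool) * bool) FT I4 D4 A4).
  intros A C. split.
  - intros [r4 [Hi [Hd Ha]]].
    destruct (inter2_fwd I3 D3 A3 Q4 _ r4 (conj Hi Hd) Ha) as [R3 [HA3 HC4]].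
    destruct (inter2_fwd I2' D2' A2 Q3 _ _ R3 HA3) as [R2 [HA2 HC3]].
    destruct (inter2_fwd I1 D1 A1 Q2 _ _ R2 HA2) as [R1 [HA1 HC2]].
    destruct (inter2_fwd (I0 B) (D0 B) (C0 B r) (C1 B) _ _ R1 HA1) as [R0 [HC0 HC1]].
    exact (core_fwd beta Hbeta B f HB r A C _ R0 HC0 HC1 HC2 HC3 HC4).
  - intros Hrel. destruct (core_bwd beta Hbeta B f HB r A C Hrel) as [s [Hrun [H0 [H1 [H2 [H3 H4]]]]]].
    destruct (inter2_bwd (I0 B) (D0 B) (C0 B r) (C1 B) _ s Hrun H0 H1) as [s1 [Hr1 [Hf1 Ha1]]].
    assert (H2' : inf (fun i => Q2 (s1 i))).
    { refine (inf_mono _ _ _ H2). intros i H. unfold Q2; cbv beta. rewrite Hf1. exact H. }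
    destruct (inter2_bwd I1 D1 A1 Q2 _ s1 Hr1 Ha1 H2') as [s2 [Hr2 [Hf2 Ha2]]].
    assert (H3' : inf (fun i => Q3 (s2 i))).
    { refine (inf_mono _ _ _ H3). intros i H. unfold Q3; cbv beta. rewrite Hf2, Hf1. exact H. }
    destruct (inter2_bwd I2' D2' A2 Q3 _ s2 Hr2 Ha2 H3') as [s3 [Hr3 [Hf3 Ha3]]].
    assert (H4' : inf (fun i => Q4 (s3 i))).
    { refine (inf_mono _ _ _ H4). intros i H. unfold Q4; cbv beta. rewrite Hf3, Hf2, Hf1. exact H. }
    destruct (inter2_bwd I3 D3 A3 Q4 _ s3 Hr3 Ha3 H4') as [s4 [[Hr4a Hr4b] [Hf4 Ha4]]].
    exists s4. split; [exact Hr4a|split; [exact Hr4b|exact Ha4]].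
Qed.
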